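(* Let $m\ge1$ and $\mathcal{B}=\mathcal{B}_{1,m}=G_m$ (the block of cells of size $1$). Then $$\langle\chi_{\mathcal{B}},\ \det\cdot\varepsilon\cdot\psi\rangle_{\mathcal{B}}=\frac{\binom{2m}{m}}{4^m},\qquad \langle\chi_{\mathcal{B}},\ \det\cdot\psi\rangle_{\mathcal{B}}=\frac{(-1)^{m+1}}{2m}\cdot\frac{\binom{2m-2}{m-1}}{4^{m-1}}.$$ In particular the first quantity equals $|L_m|/|G_m|$, where $L_m$ is the set of elements of $G_m$ satisfying condition (L).
   Context: $G_m$ is the signed permutation group of bijections of $\{\pm1,\dots,\pm m\}$ commuting with negation; write $g\in G_m$ as $(s_1,\dots,s_m;\sigma)$, $s_i\in\{\pm1\}$, $\sigma\in S_m$ (the signed permutation matrix with $(\sigma(i),i)$ entry $s_i$). Here $\psi\equiv1$, $\varepsilon(g)=\operatorname{sgn}(\sigma)$, and $\det(g)=\operatorname{sgn}(\sigma)$ is the sign of the underlying permutation (signs forgotten). An element $g\in G_m$ satisfies condition (L) if for every $i$ the points $i$ and $-i$ lie in different orbits of $\langle g\rangle$ on $\{\pm1,\dots,\pm m\}$; $\chi_{\mathcal{B}}$ is the indicator of (L). For functions $\alpha,\beta$ on a finite group $H$, $\langle\alpha,\beta\rangle_H=\frac1{|H|}\sum_{h\in H}\alpha(h)\overline{\beta(h)}$. *)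

(* Defs.v *)
From HB Require Import structures.
From mathcomp Require Import all_boot all_order all_algebra all_fingroup.
Set Implicit Arguments. Unset Strict Implicit. Unset Printing Implicit Defensive.
Import GRing.Theory Num.Theory.
Local Open Scope ring_scope.

(* The signed permutation group G_m: g = (s_1..s_m ; sigma), s_i = (-1)^(s i)
   encoded by a boolean (true = -1). *)
Definition Gm (m : nat) : finType := ({ffun 'I_m -> bool} * {perm 'I_m})%type.

(* The points {+-1,...,+-m}: (i, b) stands for (-1)^b (i+1). *)
Definition Pt (m : nat) : finType := ('I_m * bool)%type.

Definition gact (m : nat) (g : Gm m) (x : Pt m) : Pt m :=
  (g.2 x.1, x.2 (+) g.1 x.1).

Definition condL (m : nat) (g : Gm m) : bool :=
  [forall i : 'I_m, ~~ fconnect (gact g) (i, false) (i, true)].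

Definition chiB (m : nat) (g : Gm m) : rat := (condL g)%:R.
Definition psi (m : nat) (g : Gm m) : rat := 1.
Definition eps (m : nat) (g : Gm m) : rat := (-1) ^+ odd_perm g.2.
Definition detG (m : nat) (g : Gm m) : rat := (-1) ^+ odd_perm g.2.

(* <alpha, beta>_H = 1/|H| sum alpha(h) conj(beta(h)); values are rational (real),
   so conjugation is the identity. *)
Definition inner (T : finType) (a b : T -> rat) : rat :=
  (#|T|%:R)^-1 * \sum_(h : T) a h * b h.

Definition Lset (m : nat) : {set Gm m} := [set g | condL g].

(* Main.v *)
Require Import Defs.
From HB Require Import structures.
From mathcomp Require Import all_boot all_order all_algebra all_fingroup.
From mathcomp Require Import ring zify.
Import GRing.Theory Num.Theory.
Local Open Scope ring_scope.
Set Implicit Arguments. Unset Strict Implicit. Unset Printing Implicit Defensive.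

Section FirstReturn.
Variables (T T' : finType) (f : T -> T) (f' : T' -> T') (e : T' -> T) (A : pred T).
Hypothesis e_inj : injective e.
Hypothesis eA : forall y, A (e y).
Hypothesis step : forall y, f (e y) = e (f' y) \/ (~~ A (f (e y)) /\ f (f (e y)) = e (f' y)).

Lemma fr_fwd x y : fconnect f' x y -> fconnect f (e x) (e y).
Proof.
move=> /iter_findex <-; elim: (findex _ _ _) => [|n IH] /=; first exact: connect0.
apply: (connect_trans IH); have [<-|[_ <-]] := step (iter n f' x).
  exact: fconnect1.
exact: connect_trans (fconnect1 _ _) (fconnect1 _ _).
Qed.

Lemma fr_bwd x y : fconnect f (e x) (e y) -> fconnect f' x y.
Proof.
move=> /iter_findex; move: (findex _ _ _) => n.
elim/ltn_ind: n x => -[|n] IH x.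
  by move/e_inj ->; exact: connect0.
rewrite iterSr.
have [E|[nA E]] := step x.
  rewrite E => /IH => /(_ (ltnSn n)) H; exact: connect_trans (fconnect1 _ _) H.
case: n IH => [|n] IH.
  by move=> /= Ey; rewrite Ey eA in nA.
rewrite iterSr E => /IH => /(_ (ltnW (ltnSn _))) H.
exact: connect_trans (fconnect1 _ _) H.
Qed.

Lemma fr_eq x y : fconnect f (e x) (e y) = fconnect f' x y.
Proof. by apply/idP/idP; [apply: fr_bwd | apply: fr_fwd]. Qed.
End FirstReturn.

Section Ext.
Variable m : nat.

Definition Lp (g : Gm m) : {perm 'I_m.+1} := lift_perm ord_max ord_max g.2.

Definition extP (g : Gm m) (j : 'I_m.+1) : {perm 'I_m.+1} :=
  Lp g * tperm ord_max (Lp g j).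

Definition extS (g : Gm m) (j : 'I_m.+1) (b : bool) : {ffun 'I_m.+1 -> bool} :=
  [ffun x => if unlift ord_max x is Some i then g.1 i (+) (b && (x == j)) else b].

Definition ext (x : Gm m * 'I_m.+1 * bool) : Gm m.+1 :=
  (extS x.1.1 x.1.2 x.2, extP x.1.1 x.1.2).

Definition emb (y : Pt m) : Pt m.+1 := (lift ord_max y.1, y.2).

Lemma gact_inj n (g : Gm n) : injective (Defs.gact g).
Proof.
move=> [x1 c1] [x2 c2] [] /perm_inj E; rewrite /= E.
by case: c1; case: c2; case: (g.1 x2).
Qed.

Lemma emb_inj : injective emb.
Proof. move=> [x1 c1] [x2 c2] E; have E1 : lift ord_max x1 = lift ord_max x2 := congr1 fst E. have E2 : c1 = c2 := congr1 snd E. by rewrite (lift_inj E1) E2. Qed.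

Lemma extP_max g j : extP g j ord_max = Lp g j.
Proof. by rewrite permM /Lp lift_perm_id tpermL. Qed.

Lemma extP_j g j : extP g j j = ord_max.
Proof. by rewrite permM tpermR. Qed.

Lemma extP_lift g j i : lift ord_max i != j ->
  extP g j (lift ord_max i) = lift ord_max (g.2 i).
Proof.
move=> ne; rewrite permM /Lp lift_perm_lift tpermD //.
  by rewrite neq_lift.
by rewrite -(lift_perm_lift ord_max ord_max g.2) (inj_eq perm_inj) eq_sym.
Qed.

Lemma extS_max g j b : extS g j b ord_max = b.
Proof. by rewrite ffunE unlift_none. Qed.

Lemma extS_lift g j b i : extS g j b (lift ord_max i) = g.1 i (+) (b && (lift ord_max i == j)).
Proof. by rewrite ffunE liftK. Qed.

Lemma ext_step (x : Gm m * 'I_m.+1 * bool) (y : Pt m) :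
  Defs.gact (ext x) (emb y) = emb (Defs.gact x.1.1 y) \/
  (~~ ((Defs.gact (ext x) (emb y)).1 != ord_max) /\ Defs.gact (ext x) (Defs.gact (ext x) (emb y)) = emb (Defs.gact x.1.1 y)).
Proof.
case: x => [[g j] b]; case: y => [i c].
rewrite /Defs.gact /emb /ext /=.
have [E|ne] := eqVneq (lift ord_max i) j.
  right; rewrite -E extP_j eqxx /=; split => //.
  rewrite extP_max extS_max extS_lift eqxx /Lp lift_perm_lift.
  by congr (_, _); case: c; case: b; case: (g.1 i).
by left; rewrite extP_lift // extS_lift (negbTE ne) andbF addbF.
Qed.

End Ext.

Lemma fconnect_ff (T : finType) (f : T -> T) (finj : injective f) x y :
  fconnect f x y = fconnect f (f x) (f y).
Proof. by rewrite (same_fconnect1 finj x y) (same_fconnect1_r finj (f x) y). Qed.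

Lemma iter_fixpt (T : Type) (f : T -> T) x n : f x = x -> iter n f x = x.
Proof. by move=> fx; elim: n => //= n ->. Qed.

Lemma condL_ext m (x : Gm m * 'I_m.+1 * bool) :
  condL (ext x) = condL x.1.1 && ((x.1.2 != ord_max) || ~~ x.2).
Proof.
have conn : forall y z, fconnect (Defs.gact (ext x)) (emb y) (emb z)
    = fconnect (Defs.gact x.1.1) y z.
  move=> y z; apply: (fr_eq (A := fun p : Pt m.+1 => p.1 != ord_max)).
  - exact: emb_inj.
  - by move=> y'; rewrite /= eq_sym neq_lift.
  - exact: ext_step.
case: x conn => [[g j] b] conn /=.
apply/idP/idP.
- move/forallP => H; apply/andP; split.
    apply/forallP => i; have := H (lift (@ord_max m) i).
    by rewrite -[(lift (@ord_max m) i, false)]/(emb (i,false)) -[(lift (@ord_max m) i, true)]/(emb (i,true)) conn.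
  apply/orP; case: (eqVneq j ord_max) => [Ej|]; [right|by left].
  apply/negP => Hb; have := H ord_max.
  rewrite (_ : (ord_max,true) = Defs.gact (ext (g,j,b)) (ord_max,false)) ?fconnect1 //.
  by rewrite /Defs.gact /ext /= extP_max extS_max Ej /Lp lift_perm_id Hb.
- case/andP => /forallP H1 H2; apply/forallP => i.
  case: (unliftP ord_max i) => [i'|] ->.
    by rewrite -[(lift (@ord_max m) i', false)]/(emb (i',false)) -[(lift (@ord_max m) i', true)]/(emb (i',true)) conn.
  case: (unliftP ord_max j) => [j'|] Ej.
    have e1 : forall c, Defs.gact (ext (g,j,b)) (ord_max, c) = emb (g.2 j', c (+) b).
      by move=> c; rewrite /Defs.gact /ext /emb /= extP_max extS_max Ej /Lp lift_perm_lift.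
    rewrite (fconnect_ff (@gact_inj _ (ext (g,j,b)))) !e1 conn.
    case: b {H2 conn e1} => /=; last exact: H1.
    by rewrite fconnect_sym ?H1 //; exact: gact_inj.
  rewrite Ej eqxx /= in H2.
  have fx : Defs.gact (ext (g, j, b)) (ord_max, false) = (ord_max, false).
    by rewrite /Defs.gact /ext /= extP_max extS_max Ej /Lp lift_perm_id (negbTE H2).
  apply/negP => /iter_findex; rewrite iter_fixpt //.
Qed.

Lemma odd_ext m (x : Gm m * 'I_m.+1 * bool) :
  odd_perm (ext x).2 = odd_perm x.1.1.2 (+) (x.1.2 != ord_max).
Proof.
case: x => [[g j] b]; rewrite /ext /= /extP odd_permM odd_tperm /Lp odd_lift_perm addbb /=.
by rewrite -{1}(lift_perm_id ord_max ord_max g.2) (inj_eq perm_inj) eq_sym.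
Qed.

Lemma Lp_ext m (g : Gm m) j : Lp g = (extP g j * tperm ord_max (extP g j ord_max))%g.
Proof. by rewrite extP_max /extP -[X in (_ * X)%g]tpermV mulgK. Qed.

Lemma ext_inj m : injective (@ext m).
Proof.
move=> [[[s1 p1] j1] b1] [[[s2 p2] j2] b2] E.
have Ep : extP (s1,p1) j1 = extP (s2,p2) j2 := congr1 snd E.
have Es : extS (s1,p1) j1 b1 = extS (s2,p2) j2 b2 := congr1 fst E.
have ej : j1 = j2.
  by apply: (@perm_inj _ (extP (s1,p1) j1)); rewrite extP_j Ep extP_j.
subst j2.
have eb : b1 = b2.
  by have := congr1 (fun f : {ffun 'I_m.+1 -> bool} => f ord_max) Es; rewrite !extS_max.
subst b2.
have EL : Lp (s1,p1) = Lp (s2,p2) by rewrite (Lp_ext _ j1) Ep -Lp_ext.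
have ep : p1 = p2.
  apply/permP => i; have := congr1 (fun p : {perm _} => p (lift ord_max i)) EL.
  by rewrite /Lp !lift_perm_lift => /lift_inj.
have es : s1 = s2.
  apply/ffunP => i; have := congr1 (fun f : {ffun 'I_m.+1 -> bool} => f (lift ord_max i)) Es.
  rewrite !extS_lift /= => /(congr1 (addb ^~ (b1 && (lift ord_max i == j1)))).
  by rewrite -!addbA addbb !addbF.
by rewrite ep es.
Qed.

Lemma card_Gm m : #|Gm m| = (2 ^ m * m`!)%N.
Proof. by rewrite /Gm card_prod card_ffun card_bool card_ord card_Sn. Qed.

Lemma sum_ext m (F : Gm m.+1 -> rat) : \sum_(g : Gm m.+1) F g =
  \sum_(g : Gm m) \sum_(j : 'I_m.+1) \sum_(b : bool) F (ext (g,j,b)).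
Proof.
rewrite (reindex (@ext m)).
  rewrite (pair_bigA _ (fun g j => \sum_(b : bool) F (ext (g,j,b)))) /=.
  rewrite (pair_bigA _ (fun p b => F (ext (p.1,p.2,b)))) /=.
  by apply: eq_bigr => -[[g j] b].
apply: onW_bij; apply: inj_card_bij; first exact: ext_inj.
rewrite (card_Gm m.+1) !card_prod card_ffun card_bool !card_ord card_Sn factS expnS; apply/eqP; nia.
Qed.

Definition S1 m := \sum_(g : Gm m) chiB g.
Definition S2 m := \sum_(g : Gm m) chiB g * detG g.

Lemma chiB_ext m g (j : 'I_m.+1) b :
  chiB (ext (g,j,b)) = chiB g * ((j != ord_max) || ~~ b)%:R.
Proof. by rewrite /chiB condL_ext /= -natrM mulnb. Qed.

Lemma detG_ext m g (j : 'I_m.+1) b :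
  detG (ext (g,j,b)) = detG g * (-1) ^+ (j != ord_max).
Proof. by rewrite /detG odd_ext /= signr_addb. Qed.

Lemma widen_neq m (i : 'I_m) : (widen_ord (leqnSn m) i != ord_max).
Proof. by rewrite -val_eqE /= ltn_eqF. Qed.

Lemma S1_rec m : S1 m.+1 = S1 m * (2 * m + 1)%:R.
Proof.
rewrite /S1 sum_ext mulr_suml; apply: eq_bigr => g _.
under eq_bigr do under eq_bigr do rewrite chiB_ext.
transitivity (chiB g * \sum_(j < m.+1) \sum_b (((j != ord_max) || ~~ b)%:R : rat)).
  rewrite mulr_sumr; apply: eq_bigr => j _; rewrite mulr_sumr; apply: eq_bigr => b _.
  by [].
congr (_ * _).
rewrite big_ord_recr /= big_bool /= eqxx /=.
under eq_bigr do rewrite big_bool /= widen_neq.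
rewrite sumr_const card_ord /=.
by rewrite natrD natrM mulr_natl; ring.
Qed.

Lemma S2_rec m : S2 m.+1 = S2 m * (1 - (2 * m)%:R).
Proof.
rewrite /S2 sum_ext mulr_suml; apply: eq_bigr => g _.
under eq_bigr do under eq_bigr do rewrite chiB_ext detG_ext.
transitivity (chiB g * detG g * \sum_(j < m.+1) \sum_b
   (((j != ord_max) || ~~ b)%:R * (-1) ^+ (j != ord_max) : rat)).
  rewrite mulr_sumr; apply: eq_bigr => j _; rewrite mulr_sumr; apply: eq_bigr => b _.
  by rewrite mulrACA.
congr (_ * _).
rewrite big_ord_recr /= big_bool /= eqxx /=.
under eq_bigr do rewrite big_bool /= widen_neq.
rewrite sumr_const card_ord /=.
by rewrite natrM mulr_natl; ring.
Qed.

Lemma Gm0_cond (g : Gm 0) : condL g.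
Proof. by apply/forallP => -[]. Qed.

Lemma Gm0_det (g : Gm 0) : detG g = 1.
Proof.
rewrite /detG (_ : g.2 = 1%g) ?odd_perm1 //.
by apply/permP => -[].
Qed.

Lemma S1_0 : S1 0 = 1.
Proof.
rewrite /S1 (eq_bigr (fun _ => 1)); last by move=> g _; rewrite /chiB Gm0_cond.
by rewrite sumr_const card_Gm.
Qed.

Lemma S2_0 : S2 0 = 1.
Proof.
rewrite /S2 (eq_bigr (fun _ => 1)); last by move=> g _; rewrite /chiB Gm0_cond Gm0_det mulr1.
by rewrite sumr_const card_Gm.
Qed.

Lemma S1_fact k : S1 k * (2 ^ k * k`!)%:R = (2 * k)`!%:R.
Proof.
elim: k => [|k IH]; first by rewrite S1_0 mul1r.
have -> : (2 * k.+1 = (2 * k).+2)%N by rewrite mulnS.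
rewrite S1_rec expnS !factS !natrM -IH !natrM natrD natrM.
ring.
Qed.

Lemma S2_S1 n : S2 n.+1 = (-1) ^+ n * S1 n.
Proof.
elim: n => [|n IH]; first by rewrite S2_rec S2_0 S1_0 /=; ring.
rewrite S2_rec IH S1_rec exprS natrM natrD; ring.
Qed.

Lemma P1 k : S1 k / (2 ^ k * k`!)%:R = 'C(2 * k, k)%:R / (4 ^ k)%:R.
Proof.
have H1 := S1_fact k.
have H2 : ('C(2 * k, k) * (k`! * k`!))%:R = (2 * k)`!%:R :> rat.
  have B := @bin_fact (2 * k) k ltac:(lia).
  by rewrite (_ : (2 * k - k = k)%N) in B; [rewrite B | lia].
have f0 : (k`!%:R : rat) != 0 by rewrite pnatr_eq0 -lt0n fact_gt0.
have t0 : ((2 ^ k)%:R : rat) != 0 by rewrite pnatr_eq0 -lt0n expn_gt0.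
have -> : S1 k = (2 * k)`!%:R / (2 ^ k * k`!)%:R.
  by rewrite -H1 mulfK // natrM mulf_neq0.
have -> : ('C(2 * k, k)%:R : rat) = (2 * k)`!%:R / (k`! * k`!)%:R.
  by rewrite -H2 natrM mulfK // natrM mulf_neq0.
have -> : (4 ^ k)%N = (2 ^ k * 2 ^ k)%N by rewrite -expnMn.
rewrite !natrM; field.
by rewrite f0 t0.
Qed.

Unset Implicit Arguments.

Theorem proposition12 (m : nat) (hm : (1 <= m)%N) :
  [/\ inner (@chiB m) (fun g => detG g * eps g * psi g)
        = 'C(2 * m, m)%:R / (4 ^ m)%:R,
      inner (@chiB m) (fun g => detG g * psi g)
        = (-1) ^+ (m + 1) / (2 * m)%:R * ('C(2 * m - 2, m - 1)%:R / (4 ^ (m - 1))%:R)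
    & inner (@chiB m) (fun g => detG g * eps g * psi g)
        = #|Lset m|%:R / #|Gm m|%:R ].
Proof.
have E1 : inner (@chiB m) (fun g => detG g * eps g * psi g) = S1 m / (2 ^ m * m`!)%:R.
  rewrite /inner card_Gm mulrC /S1; congr (_ * _); apply: eq_bigr => g _.
  by rewrite /detG /eps /psi -signr_addb addbb !mulr1.
have E2 : inner (@chiB m) (fun g => detG g * psi g) = S2 m / (2 ^ m * m`!)%:R.
  rewrite /inner card_Gm mulrC /S2; congr (_ * _); apply: eq_bigr => g _.
  by rewrite /psi mulr1.
split.
- by rewrite E1 P1.
- case: m hm E2 {E1} => // n _ ->.
  rewrite S2_S1 (_ : (2 * n.+1 - 2 = 2 * n)%N); last by lia.
  rewrite (_ : (n.+1 - 1 = n)%N); last by lia.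
  rewrite -P1 expnS factS !natrM exprD.
  have f0 : (n`!%:R : rat) != 0 by rewrite pnatr_eq0 -lt0n fact_gt0.
  have t0 : ((2 ^ n)%:R : rat) != 0 by rewrite pnatr_eq0 -lt0n expn_gt0.
  have n0 : (n.+1%:R : rat) != 0 by rewrite pnatr_eq0.
  rewrite exprS expr1; set x := (-1) ^+ n.
  field.
  by rewrite f0 t0 addrC natr1 n0.
- rewrite E1 card_Gm; congr (_ / _).
  rewrite /S1 /Lset -sum1_card natr_sum [RHS]big_mkcond /=; apply: eq_bigr => g _.
  by rewrite inE /chiB; case: (condL g).
Qed.
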